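(* For any object $(E,\sigma)$ of $\mathrm{OS}_B$, the poset $E^\star$ is Noetherian, i.e. every upward-closed subset of $E^\star$ has only finitely many minimal elements.
   Context: An object of $\mathrm{OS}_B$ is a pair $(E,\sigma)$ with $E$ a totally ordered finite set and $\sigma$ an order-reversing involution with a unique fixed point; write $-e:=\sigma(e)$. $E^\star$ is the set of finite words in the alphabet $E$, partially ordered by: $e_1\cdots e_m\le f_1\cdots f_n$ iff there is a strictly increasing map $\theta:[m]\to[n]$ such that $e_i=f_{\theta(i)}$ for all $i\in[m]$, and for every $j\in[n]$ there exists $i\in[m]$ with $\theta(i)\le j$ and $f_{\theta(i)}\in\{f_j,-f_j\}$. (That is, the first word is a subword of the second containing the first occurrence of every $\sigma$-orbit appearing in the second.) *)

(* Defs.v *)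
From mathcomp Require Import all_boot all_order.
Set Implicit Arguments. Unset Strict Implicit. Unset Printing Implicit Defensive.
Import Order.TTheory.
Local Open Scope order_scope.

Definition OSB_object (d : Order.disp_t) (E : finOrderType d) (sigma : E -> E) : Prop :=
  [/\ involutive sigma,
      (forall x y : E, x <= y -> sigma y <= sigma x) &
      exists! e : E, sigma e = e].

Definition word_le (T : eqType) (sigma : T -> T) (u v : seq T) : Prop :=
  exists theta : 'I_(size u) -> 'I_(size v),
    [/\ (forall i j : 'I_(size u), (i < j)%N -> (theta i < theta j)%N),
        (forall i : 'I_(size u), tnth (in_tuple u) i = tnth (in_tuple v) (theta i)) &
        (forall j : 'I_(size v), exists i : 'I_(size u),
            (theta i <= j)%N /\
            (tnth (in_tuple v) (theta i) = tnth (in_tuple v) j \/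
             tnth (in_tuple v) (theta i) = sigma (tnth (in_tuple v) j)))].

Definition upward_closed (T : Type) (le : T -> T -> Prop) (S : T -> Prop) : Prop :=
  forall u v, S u -> le u v -> S v.

Definition minimal_in (T : Type) (le : T -> T -> Prop) (S : T -> Prop) (w : T) : Prop :=
  S w /\ forall u, S u -> le u w -> u = w.

Definition noetherian_poset (T : eqType) (le : T -> T -> Prop) : Prop :=
  forall S : T -> Prop, upward_closed le S ->
    exists s : seq T, forall w, minimal_in le S w -> w \in s.

(* Main.v *)
Require Import Defs.
From Stdlib Require Import Classical ClassicalEpsilon.
From mathcomp Require Import all_boot all_order.
Set Implicit Arguments. Unset Strict Implicit. Unset Printing Implicit Defensive.

Section Higman.
Variable A : finType.

Definition hbad (f : nat -> seq A) := forall i j, i < j -> ~~ subseq (f i) (f j).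
Definition hext (p : seq (seq A)) (f : nat -> seq A) :=
  forall i, i < size p -> f i = nth [::] p i.
Definition bad_from p := exists f, hext p f /\ hbad f.

Lemma next_ex p : exists w,
  (bad_from (rcons p w) /\ forall w', bad_from (rcons p w') -> size w <= size w')
  \/ ~ (exists w, bad_from (rcons p w)).
Proof.
case: (classic (exists w, bad_from (rcons p w))); last first.
  by move=> H; exists [::]; right.
case=> w0 Hw0.
suff: forall n w, size w = n -> bad_from (rcons p w) -> exists w,
  (bad_from (rcons p w) /\ forall w', bad_from (rcons p w') -> size w <= size w').
  by move=> /(_ _ w0 erefl Hw0) [w Hw]; exists w; left.
elim/ltn_ind => n IH w Hs Hb.
case: (classic (exists w', bad_from (rcons p w') /\ size w' < size w)).
  by case=> w' [Hb' Hlt]; apply: (IH (size w')) => //; rewrite -Hs.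
move=> Hn; exists w; split => // w' Hb'; rewrite leqNgt; apply/negP => Hlt.
by apply: Hn; exists w'.
Qed.

Definition next p := proj1_sig (constructive_indefinite_description _ (next_ex p)).

Lemma next_spec p : (exists w, bad_from (rcons p w)) ->
  bad_from (rcons p (next p)) /\ forall w', bad_from (rcons p w') -> size (next p) <= size w'.
Proof.
move=> H; rewrite /next; case: constructive_indefinite_description => w [] //= [].
Qed.

Fixpoint mb n := if n is n'.+1 then rcons (mb n') (next (mb n')) else [::].
Definition gg n := next (mb n).

Lemma size_mb n : size (mb n) = n.
Proof. by elim: n => //= n IH; rewrite size_rcons IH. Qed.

Lemma nth_mb n i : i < n -> nth [::] (mb n) i = gg i.
Proof.
elim: n => // n IH; rewrite ltnS leq_eqVlt => /orP [/eqP->|Hi] /=.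
  by rewrite nth_rcons size_mb ltnn eqxx.
by rewrite nth_rcons size_mb Hi IH.
Qed.

Lemma bad_ext p f : hext p f -> hbad f -> bad_from (rcons p (f (size p))).
Proof.
move=> He Hb; exists f; split => // i; rewrite size_rcons ltnS leq_eqVlt nth_rcons.
by case/orP => [/eqP->|Hi]; rewrite ?ltnn ?eqxx // Hi He.
Qed.

Lemma mb_bad : bad_from [::] -> forall n, bad_from (mb n).
Proof.
move=> H0; elim=> //= n [f [He Hb]].
have Hex : exists w, bad_from (rcons (mb n) w) by exists (f (size (mb n))); exact: bad_ext.
by case: (next_spec Hex).
Qed.

Theorem higman (f : nat -> seq A) : exists i j, i < j /\ subseq (f i) (f j).
Proof.
apply: NNPP => Hn.
have Hb : hbad f.
  move=> i j Hij; apply/negP => Hs; apply: Hn; by exists i, j.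
have H0 : bad_from [::] by exists f.
have Hmb := mb_bad H0.
have gbad : hbad gg.
  move=> i j Hij; case: (Hmb j.+1) => f' [He Hb'].
  have := Hb' i j Hij; rewrite !He ?size_mb // ?nth_mb //; exact: ltn_trans Hij _.
have gne : forall n, gg n <> [::].
  by move=> n Hg; have := gbad n n.+1 (ltnSn n); rewrite Hg sub0seq.
have [a Ha] : exists a, forall N, exists n, N <= n /\ ohead (gg n) = Some a.
  apply: NNPP => Hna.
  have Hall : forall a, exists N, forall n, N <= n -> ohead (gg n) <> Some a.
    move=> a; apply: NNPP => Hx; apply: Hna; exists a => N.
    apply: NNPP => Hy; apply: Hx; exists N => n Hn1 Hn2; apply: Hy; by exists n.
  have Hlist : forall s : seq A, exists N, forall a, a \in s -> forall n, N <= n ->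
      ohead (gg n) <> Some a.
    elim=> [|a s [N HN]]; first by exists 0.
    case: (Hall a) => N' HN'; exists (maxn N N') => b; rewrite in_cons.
    case/orP => [/eqP->|Hb1] n Hn1.
      by apply: HN'; apply: leq_trans Hn1; exact: leq_maxr.
    by apply: HN => //; apply: leq_trans Hn1; exact: leq_maxl.
  have [N HN] := Hlist (enum A).
  case Hg: (gg N) => [|b t]; first exact: (gne N).
  by apply: (HN b _ N) => //; [rewrite mem_enum | rewrite Hg].
pose nx N := proj1_sig (constructive_indefinite_description _ (Ha N)).
have nxP : forall N, N <= nx N /\ ohead (gg (nx N)) = Some a.
  by move=> N; rewrite /nx; case: constructive_indefinite_description.
pose fix h k := if k is k'.+1 then nx (h k').+1 else nx 0.
have hS : forall k, h k < h k.+1 by move=> k /=; case: (nxP (h k).+1).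
have hlt : forall k d, h k < h (k + d).+1.
  move=> k; elim=> [|d IH]; first by rewrite addn0.
  by apply: ltn_trans IH _; rewrite addnS.
have hmono : forall k l, k < l -> h k < h l.
  by move=> k l Hkl; rewrite -(subnKC Hkl) addSn hlt.
have h0le : forall k, h 0 <= h k.
  by case=> // k; apply: ltnW; apply: hmono.
have hhead : forall k, gg (h k) = a :: behead (gg (h k)).
  move=> k; have : ohead (gg (h k)) = Some a.
    by case: k => [|k] /=; [case: (nxP 0) | case: (nxP (h k).+1)].
  by case: (gg (h k)) => //= b t [->].
pose h0 := h 0.
pose f' i := if i < h0 then gg i else behead (gg (h (i - h0))).
have Hext : hext (rcons (mb h0) (behead (gg h0))) f'.
  move=> i; rewrite size_rcons size_mb ltnS leq_eqVlt nth_rcons size_mb /f'.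
  case/orP => [/eqP->|Hi]; first by rewrite ltnn eqxx subnn.
  by rewrite Hi nth_mb.
have Hbad' : hbad f'.
  move=> i j Hij; rewrite /f'.
  case: (ltnP i h0) => Hi; case: (ltnP j h0) => Hj.
  - exact: gbad.
  - apply/negP => Hs; have := gbad i (h (j - h0)) (leq_trans Hi (h0le _)).
    rewrite (subseq_trans Hs) //; rewrite [X in subseq _ X]hhead; exact: subseq_cons.
  - by have := leq_trans Hj (leq_trans Hi (ltnW Hij)); rewrite ltnn.
  - apply/negP => Hs.
    have Hk : i - h0 < j - h0 by rewrite ltn_sub2r // (leq_ltn_trans Hi Hij).
    have := gbad _ _ (hmono _ _ Hk); rewrite hhead [X in subseq _ X]hhead /= eqxx Hs.
    by [].
have Hex : exists w, bad_from (rcons (mb h0) w) by exists (behead (gg h0)); exists f'.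
case: (next_spec Hex) => _ /(_ (behead (gg h0))) Hmin.
have : size (gg h0) <= size (behead (gg h0)) by apply: Hmin; exists f'.
by rewrite [X in size X <= _]hhead /= ltnn.
Qed.

End Higman.

Lemma subseq_idx (T : eqType) (x0 : T) (s t : seq T) : subseq s t ->
  exists th : nat -> nat, [/\ forall i j, i < j -> j < size s -> th i < th j,
    forall i, i < size s -> th i < size t &
    forall i, i < size s -> nth x0 s i = nth x0 t (th i)].
Proof.
elim: t s => [|y t IH] [|x s] //=.
- by move=> _; exists id.
- by move=> _; exists id.
case: eqP => [<-|Hne] Hs.
  case: (IH _ Hs) => th [H1 H2 H3].
  exists (fun i => if i is i'.+1 then (th i').+1 else 0); split.
  - by move=> [|i] [|j] //= Hij Hj; rewrite ltnS H1.
  - by move=> [|i] //= Hi; rewrite ltnS H2.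
  - by move=> [|i] //= Hi; rewrite H3.
case: (IH _ Hs) => th [H1 H2 H3].
exists (fun i => (th i).+1); split.
- by move=> i j Hij Hj; rewrite ltnS H1.
- by move=> i Hi; rewrite ltnS H2.
- by move=> i Hi; rewrite H3.
Qed.

Section Enc.
Variables (E : finType) (sigma : E -> E) (x0 : E).
Hypothesis inv : involutive sigma.

Definition orb (x y : E) := (x == y) || (x == sigma y).

Lemma orb_refl x : orb x x. Proof. by rewrite /orb eqxx. Qed.
Lemma orb_sym x y : orb x y -> orb y x.
Proof.
by rewrite /orb => /orP [/eqP->|/eqP->]; rewrite ?eqxx // inv eqxx orbT.
Qed.
Lemma orb_trans x y z : orb x y -> orb y z -> orb x z.
Proof.
rewrite /orb => /orP [/eqP->|/eqP->] // /orP [/eqP->|/eqP->]; rewrite ?eqxx ?orbT //.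
by rewrite inv eqxx.
Qed.

Definition flag (v : seq E) p := ~~ has (orb (nth x0 v p)) (take p v).
Definition SS (v : seq E) : {set E} := [set x | has (orb x) v].
Definition B := (E * bool + {set E})%type.
Definition enc (v : seq E) : seq B :=
  rcons [seq inl (nth x0 v p, flag v p) | p <- iota 0 (size v)] (inr (SS v)).

Lemma size_enc v : size (enc v) = (size v).+1.
Proof. by rewrite size_rcons size_map size_iota. Qed.

Lemma nth_enc d v q : nth d (enc v) q =
  if q < size v then inl (nth x0 v q, flag v q)
  else if q == size v then inr (SS v) else d.
Proof.
rewrite /enc nth_rcons size_map size_iota; case: ifP => // Hq.
by rewrite (nth_map 0) ?size_iota // nth_iota.
Qed.

Lemma enc_le u v : subseq (enc u) (enc v) -> word_le sigma u v.
Proof.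
move=> /(subseq_idx (inr set0)) [th [H1 H2 H3]].
rewrite !size_enc in H1 H2 H3.
have Hi : forall i, i < size u ->
   [/\ th i < size v, nth x0 v (th i) = nth x0 u i & flag v (th i) = flag u i].
  move=> i Hi; have := H3 i; rewrite !nth_enc Hi => /(_ (ltn_trans Hi (ltnSn _))).
  have := H2 i (ltn_trans Hi (ltnSn _)); rewrite ltnS leq_eqVlt.
  case/orP => [/eqP->|Hl]; rewrite ?ltnn ?eqxx ?Hl // => -[-> ->]; by split.
have HS : SS u = SS v.
  have := H3 (size u) (ltnSn _); rewrite !nth_enc ltnn eqxx.
  have := H2 (size u) (ltnSn _); rewrite ltnS leq_eqVlt.
  by case/orP => [/eqP->|Hl]; rewrite ?ltnn ?eqxx ?Hl // => -[->].
have Hb : forall i : 'I_(size u), th i < size v by move=> i; case: (Hi i (ltn_ord i)).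
exists (fun i => Ordinal (Hb i)); split.
- by move=> i j Hij /=; apply: H1 => //; apply: ltn_trans (ltn_ord j) _.
- by move=> i; rewrite !(tnth_nth x0) /=; case: (Hi i (ltn_ord i)).
move=> j; set w := nth x0 v j.
have Hw : has (orb w) u.
  have : w \in SS v by rewrite inE; apply/hasP; exists w; rewrite ?orb_refl ?mem_nth.
  by rewrite -HS inE.
have Hf : find (orb w) u < size u by rewrite -has_find.
have Hfw := nth_find x0 Hw.
exists (Ordinal Hf); rewrite !(tnth_nth x0) /=.
case: (Hi _ Hf) => Hp Hv Hfl.
have Hfu : flag u (find (orb w) u).
  rewrite /flag; apply/negP => /(has_nthP x0) [k].
  rewrite size_take Hf => Hk; rewrite nth_take // => Ho.
  by have := before_find x0 Hk; rewrite (orb_trans Hfw Ho).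
rewrite -Hfl in Hfu; rewrite Hv; split.
  rewrite leqNgt; apply/negP => Hjp; move: Hfu; rewrite /flag Hv; apply/negP/negPn.
  apply/hasP; exists w; last exact: orb_sym.
  move: (@mem_nth _ x0 (take (th (find (orb w) u)) v) j).
  by rewrite size_take Hp nth_take //; apply.
by case/orP: (orb_sym Hfw) => /eqP->; [left|right].
Qed.

Lemma word_good (f : nat -> seq E) : exists i j, i < j /\ word_le sigma (f i) (f j).
Proof.
have [i [j [Hij Hs]]] := higman (fun n => enc (f n)).
by exists i, j; split => //; apply: enc_le.
Qed.

End Enc.

Theorem mainTheorem7 (d : Order.disp_t) (E : finOrderType d) (sigma : E -> E) :
  OSB_object sigma -> noetherian_poset (word_le sigma).
Proof.
case=> inv _ [x0 _] S HS.
apply: NNPP => Hn.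
have Hp : forall s : seq (seq E), exists w, minimal_in (word_le sigma) S w /\ w \notin s.
  move=> s; apply: NNPP => Hx; apply: Hn; exists s => w Hw.
  apply: NNPP => Hy; apply: Hx; exists w; split => //; exact/negP.
pose pick s := proj1_sig (constructive_indefinite_description _ (Hp s)).
have pickP : forall s, minimal_in (word_le sigma) S (pick s) /\ pick s \notin s.
  by move=> s; rewrite /pick; case: constructive_indefinite_description.
pose fix F n := if n is n'.+1 then rcons (F n') (pick (F n')) else [::].
pose f n := pick (F n).
have Hmem : forall j i, i < j -> f i \in F j.
  elim=> // j IH i; rewrite ltnS leq_eqVlt /= mem_rcons in_cons.
  by case/orP => [/eqP->|/IH->]; rewrite ?eqxx ?orbT.
have [i [j [Hij Hle]]] := word_good x0 inv f.
case: (pickP (F j)) => [[_ Hmin] Hnot].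
case: (pickP (F i)) => [[Hsi _] _].
have Heq := Hmin _ Hsi Hle.
by move: Hnot; rewrite -Heq => /negP; apply; exact: (Hmem j i Hij).
Qed.
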